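(* Let $a\ge2$ be an integer. Then $$D_{2^a+1}\equiv 3+2^{a+2}\pmod{4^{a+1}}\qquad\text{and}\qquad D_{2^a-1}\equiv -1\pmod{4^{a+1}}.$$
   Context: $D_n=\sum_{k=0}^{n}\binom{n}{k}\binom{n+k}{k}$ are the central Delannoy numbers. *)

(* Defs.v *)
From mathcomp Require Import all_boot all_order all_algebra.
Set Implicit Arguments. Unset Strict Implicit. Unset Printing Implicit Defensive.

Definition delannoy (n : nat) : nat :=
  \sum_(0 <= k < n.+1) 'C(n, k) * 'C(n + k, k).

(* Main.v *)
Require Import Defs.
From mathcomp Require Import all_boot all_order all_algebra.
From mathcomp Require Import ring zify.
Set Implicit Arguments. Unset Strict Implicit. Unset Printing Implicit Defensive.

Lemma sum_bin n : \sum_(k < n.+1) 'C(n, k) = 2 ^ n.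
Proof.
rewrite (_ : 2 = 1 + 1) // expnDn.
by apply: eq_bigr => i _; rewrite !exp1n !muln1.
Qed.

Lemma binsum n j : \sum_(k < n.+1) 'C(n, k) * 'C(k, j) = 'C(n, j) * 2 ^ (n - j).
Proof.
elim: n j => [|n IH] j.
  by rewrite big_ord_recl big_ord0 addn0 bin0 mul1n sub0n expn0 muln1 bin0n.
case: j => [|j].
  rewrite subn0 -sum_bin bin0 mul1n; apply: eq_bigr => i _; by rewrite bin0 muln1.
rewrite big_ord_recl bin0n muln0 add0n.
have -> : \sum_(i < n.+1) 'C(n.+1, bump 0 i) * 'C(bump 0 i, j.+1)
   = \sum_(i < n.+1) 'C(n, i.+1) * 'C(i.+1, j.+1) + \sum_(i < n.+1) 'C(n, i) * 'C(i.+1, j.+1).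
  by rewrite -big_split; apply: eq_bigr => i _; rewrite /bump /= binS mulnDl.
have -> : \sum_(i < n.+1) 'C(n, i.+1) * 'C(i.+1, j.+1) = 'C(n, j.+1) * 2 ^ (n - j.+1).
  rewrite -IH big_ord_recr /= bin_small // mul0n addn0 [RHS]big_ord_recl /= muln0 add0n.
  by apply: eq_bigr.
have -> : \sum_(i < n.+1) 'C(n, i) * 'C(i.+1, j.+1) = 'C(n, j.+1) * 2 ^ (n - j.+1) + 'C(n, j) * 2 ^ (n - j).
  rewrite -!IH -big_split; apply: eq_bigr => i _; by rewrite binS mulnDr.
rewrite binS mulnDl subSS addnA; congr (_ + _).
case: (ltnP n j.+1) => h; first by rewrite bin_small // !mul0n.
by rewrite -mulnDr addnn -mul2n -expnS subnSK.
Qed.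

Lemma sum_trunc (F : nat -> nat) m p : m <= p -> (forall j, m <= j -> F j = 0) ->
  \sum_(j < p) F j = \sum_(j < m) F j.
Proof.
move=> mp H; rewrite -(subnKC mp) big_split_ord /= [X in _ + X]big1 ?addn0 //.
by move=> i _; apply: H; rewrite leq_addr.
Qed.


Lemma delannoyE n : delannoy n = \sum_(k < n.+1) 'C(n, k) ^ 2 * 2 ^ k.
Proof.
rewrite /delannoy big_mkord.
transitivity (\sum_(k < n.+1) \sum_(j < n.+1) 'C(n, k) * ('C(n, j) * 'C(k, j))).
  apply: eq_bigr => k _; rewrite -big_distrr /=; congr (_ * _).
  rewrite -binomial.Vandermonde.
  transitivity (\sum_(j < k.+1) 'C(n, j) * 'C(k, j)).
    apply: eq_bigr => j _; rewrite bin_sub //; exact: (ltn_ord j).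
  rewrite -(@sum_trunc (fun j => 'C(n, j) * 'C(k, j)) k.+1 (n + k).+1) ?ltnS ?leq_addl //; last first.
    by move=> j hj; rewrite (bin_small hj) muln0.
  rewrite (@sum_trunc (fun j => 'C(n, j) * 'C(k, j)) n.+1 (n + k).+1) ?ltnS ?leq_addr //.
  by move=> j hj; rewrite (bin_small hj) mul0n.
rewrite exchange_big /=.
transitivity (\sum_(j < n.+1) 'C(n, j) ^ 2 * 2 ^ (n - j)).
  apply: eq_bigr => j _.
  transitivity ('C(n, j) * \sum_(k < n.+1) 'C(n, k) * 'C(k, j)).
    rewrite big_distrr /=; apply: eq_bigr => k _; by rewrite mulnCA.
  by rewrite binsum mulnA.
rewrite (reindex_inj rev_ord_inj) /=; apply: eq_bigr => j _.
rewrite subSS bin_sub ?subKn //; rewrite -ltnS; exact: ltn_ord.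
Qed.

Lemma pow_ge t : 3 <= t -> 2 * t + 2 <= 2 ^ t.
Proof.
elim: t => // t IH; rewrite leq_eqVlt => /orP [/eqP <- // | h].
rewrite expnS; have := IH h; lia.
Qed.

Lemma bound6 a j : 6 <= j -> 2 * a + 2 <= j + 2 * (a - trunc_log 2 j).
Proof.
move=> hj; have hp := trunc_logP (isT : 1 < 2) (leq_trans (isT : 0 < 6) hj).
set t := trunc_log 2 j in hp *.
have : 2 * t + 2 <= j.
  case: (leqP 3 t) => ht; first by apply: leq_trans (pow_ge ht) hp.
  lia.
move=> h; lia.
Qed.

Lemma Cdiv a i j : 0 < i -> i <= j -> 2 ^ (a - trunc_log 2 j) %| 'C(2 ^ a, i).
Proof.
move=> hi hij.
case: (leqP i (2 ^ a)) => hiN; last by rewrite bin_small.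
have Cp : 0 < 'C(2 ^ a, i) by rewrite bin_gt0.
have hdiv : 2 ^ a %| i * 'C(2 ^ a, i).
  by rewrite -(prednK hi) -mul_bin_diag dvdn_mulr.
rewrite pfactor_dvdn // in hdiv; last by rewrite muln_gt0 hi.
rewrite lognM // in hdiv.
have hl : logn 2 i <= trunc_log 2 j.
  rewrite -ltnS -(@ltn_exp2l 2) //.
  apply: leq_ltn_trans (dvdn_leq hi (pfactor_dvdnn 2 i)) _.
  exact: leq_ltn_trans hij (trunc_log_ltn _ _).
rewrite pfactor_dvdn //.
lia.
Qed.

Import GRing.Theory Num.Theory.
Local Open Scope ring_scope.

Definition SA (M : int) : int := ((1*100+92)) * M ^+ 0 + ((7*100+90)) * M ^+ 1 + ((10*100+20)) * M ^+ 2 + (((1*100+34)*100+40)) * M ^+ 3 + (((4*100+50)*100+56)) * M ^+ 4 + (-((36*100+86)*100+40)) * M ^+ 5 + ((((1*100+55)*100+64)*100+80)) * M ^+ 6 + (-(((2*100+62)*100+14)*100+40)) * M ^+ 7 + ((((2*100+9)*100+71)*100+52)) * M ^+ 8.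
Definition SB (M : int) : int := (((1*100+54)*100+22)) * M ^+ 0 + (-((18*100+29)*100+50)) * M ^+ 1 + ((((1*100+5)*100+1)*100+40)) * M ^+ 2 + (-(((3*100+69)*100+8)*100+80)) * M ^+ 3 + ((((8*100+57)*100+49)*100+76)) * M ^+ 4 + (-(((13*100+31)*100+20)*100+0)) * M ^+ 5 + ((((13*100+35)*100+29)*100+60)) * M ^+ 6 + (-(((7*100+86)*100+43)*100+20)) * M ^+ 7 + ((((2*100+9)*100+71)*100+52)) * M ^+ 8.

Lemma algA (M c2 c3 c4 c5 : int) :
  c2 * 2 = (8*M+1)*(8*M) -> c3 * 6 = (8*M+1)*(8*M)*(8*M-1) ->
  c4 * 24 = (8*M+1)*(8*M)*(8*M-1)*(8*M-2) ->
  c5 * 120 = (8*M+1)*(8*M)*(8*M-1)*(8*M-2)*(8*M-3) ->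
  225 * (1 + (8*M+1)^+2*2 + c2^+2*4 + c3^+2*8 + c4^+2*16 + c5^+2*32 - 3 - 4*(8*M))
  = 4 * (8*M)^+2 * SA M.
Proof.
move=> h2 h3 h4 h5; rewrite /SA.
apply: (@mulfI _ 64) => //.
have -> : 64 * (225 * (1 + (8*M+1)^+2*2 + c2^+2*4 + c3^+2*8 + c4^+2*16 + c5^+2*32 - 3 - 4*(8*M)))
  = 120*120 + (8*M+1)^+2*2*(120*120) + (c2*2)^+2*4*(60*60) + (c3*6)^+2*8*(20*20) + (c4*24)^+2*16*25
    + (c5*120)^+2*32 - 3*(120*120) - 4*(8*M)*(120*120) by ring.
rewrite h2 h3 h4 h5; ring.
Qed.

Lemma algB (M c2 c3 c4 c5 : int) :
  c2 * 2 = (8*M)*(8*M-1) -> c3 * 6 = (8*M)*(8*M-1)*(8*M-2) ->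
  c4 * 24 = (8*M)*(8*M-1)*(8*M-2)*(8*M-3) ->
  c5 * 120 = (8*M)*(8*M-1)*(8*M-2)*(8*M-3)*(8*M-4) ->
  225 * (2 * (- (8*M))^+2 + 4 * (- (8*M) + c2)^+2 + 8 * (- (8*M) + c2 - c3)^+2
         + 16 * (- (8*M) + c2 - c3 + c4)^+2 + 32 * (- (8*M) + c2 - c3 + c4 - c5)^+2)
  = 4 * (8*M)^+2 * SB M.
Proof.
move=> h2 h3 h4 h5; rewrite /SB.
apply: (@mulfI _ 64) => //.
have -> : 64 * (225 * (2 * (- (8*M))^+2 + 4 * (- (8*M) + c2)^+2 + 8 * (- (8*M) + c2 - c3)^+2
         + 16 * (- (8*M) + c2 - c3 + c4)^+2 + 32 * (- (8*M) + c2 - c3 + c4 - c5)^+2))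
  = 2 * (- (8*M)*120)^+2 + 4 * (- (8*M)*120 + (c2*2)*60)^+2
    + 8 * (- (8*M)*120 + (c2*2)*60 - (c3*6)*20)^+2
    + 16 * (- (8*M)*120 + (c2*2)*60 - (c3*6)*20 + (c4*24)*5)^+2
    + 32 * (- (8*M)*120 + (c2*2)*60 - (c3*6)*20 + (c4*24)*5 - c5*120)^+2 by ring.
rewrite h2 h3 h4 h5; ring.
Qed.

Lemma natzX n k : (n ^ k)%N%:Z = n%:Z ^+ k.
Proof. by rewrite -[LHS]natz natrX natz. Qed.

Lemma PoszS (F : nat -> nat) n : (\sum_(i < n) F i)%N%:Z = \sum_(i < n) (F i)%:Z.
Proof. elim: n => [|n IH]; first by rewrite !big_ord0. by rewrite !big_ord_recr /= PoszD IH. Qed.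

Lemma binZ n : (5 <= n)%N ->
  ('C(n, 2))%:Z * 2 = n%:Z * (n%:Z - 1) /\ ('C(n, 3))%:Z * 6 = n%:Z * (n%:Z - 1) * (n%:Z - 2) /\
  ('C(n, 4))%:Z * 24 = n%:Z * (n%:Z - 1) * (n%:Z - 2) * (n%:Z - 3) /\
  ('C(n, 5))%:Z * 120 = n%:Z * (n%:Z - 1) * (n%:Z - 2) * (n%:Z - 3) * (n%:Z - 4).
Proof.
case: n => [|[|[|[|[|m]]]]] // _.
have h2 := bin_ffact m.+4.+1 2; have h3 := bin_ffact m.+4.+1 3.
have h4 := bin_ffact m.+4.+1 4; have h5 := bin_ffact m.+4.+1 5.
rewrite !ffactSS ffactn0 muln1 in h2 h3 h4 h5.
move: h2 h3 h4 h5 => /(congr1 Posz) h2 /(congr1 Posz) h3 /(congr1 Posz) h4 /(congr1 Posz) h5.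
rewrite !PoszM in h2 h3 h4 h5.
rewrite !mul1r !mulr1 in h2 h3 h4 h5.
split; [|split; [|split]].
- by rewrite h2 !intS; ring.
- by rewrite (_ : (6:int) = 3 * 2) // h3 !intS; ring.
- by rewrite (_ : (24:int) = 4 * (3 * 2)) // h4 !intS; ring.
- by rewrite (_ : (120:int) = 5 * (4 * (3 * 2))) // h5 !intS; ring.
Qed.

Lemma Bsign n j : (-1) ^+ j * ('C(n, j))%:Z = \sum_(i < j.+1) (-1) ^+ i * ('C(n.+1, i))%:Z.
Proof.
elim: j => [|j IH]; first by rewrite big_ord_recl big_ord0 !bin0 expr0 mul1r addr0.
rewrite big_ord_recr /= -IH binS PoszD exprS; ring.
Qed.

Lemma geo n : \sum_(j < n) (2 : int) ^+ j = 2 ^+ n - 1.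
Proof. elim: n => [|n IH]; first by rewrite big_ord0. rewrite big_ord_recr /= IH exprS; ring. Qed.

Lemma G1 (c : nat -> int) n :
  \sum_(j < n) 2 ^+ j * (\sum_(i < j) c i) = \sum_(i < n) c i * (2 ^+ n - 2 ^+ i.+1).
Proof.
elim: n => [|n IH]; first by rewrite !big_ord0.
rewrite big_ord_recr IH /= [RHS]big_ord_recr /= subrr mulr0 addr0.
rewrite big_distrr -big_split /=; apply: eq_bigr => i _; rewrite (exprS _ n); ring.
Qed.

Lemma alt0 N : (0 < N)%N -> \sum_(i < N.+1) (-1) ^+ i * ('C(N, i))%:Z = 0.
Proof.
move=> hN; have := exprBn (1 : int) 1 N; rewrite subrr expr0n eqn0Ngt hN /= => E; rewrite [RHS]E.
by apply: eq_bigr => i _; rewrite !expr1n !mulr1 -mulr_natr natz.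
Qed.

Lemma alt2 N : ~~ odd N -> \sum_(i < N.+1) (-1) ^+ i * ('C(N, i))%:Z * 2 ^+ i = 1.
Proof.
move=> hN; have := exprBn (1 : int) 2 N.
rewrite (_ : 1 - 2 = -1) // -signr_odd (negbTE hN) expr0 => E; rewrite [RHS]E.
by apply: eq_bigr => i _; rewrite !expr1n !mulr1 -mulr_natr natz; ring.
Qed.

Lemma split_at (F : nat -> int) n k : (k <= n)%N ->
  \sum_(j < n) F j = \sum_(j < k) F j + \sum_(j < n - k) F (k + j)%N.
Proof.
move=> h; have E m : \sum_(j < m) F j = \sum_(0 <= j < m) F j by rewrite big_mkord.
rewrite !E (@big_cat_nat _ _ _ k) //; congr (_ + _).
rewrite -{1}(add0n k) big_addn big_mkord; apply: eq_bigr => i _; by rewrite addnC.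
Qed.

Lemma split_atn (F : nat -> nat) n k : (k <= n)%N ->
  (\sum_(j < n) F j = \sum_(j < k) F j + \sum_(j < n - k) F (k + j))%N.
Proof.
move=> h; have E m : \sum_(j < m) F j = \sum_(0 <= j < m) F j by rewrite big_mkord.
rewrite !E (@big_cat_nat _ _ _ k) //; congr (_ + _).
rewrite -{1}(add0n k) big_addn big_mkord; apply: eq_bigr => i _; by rewrite addnC.
Qed.

Lemma four_pow a : (3 <= a)%N ->
  (4 : int) ^+ (a + 1) = 2 ^+ (2 * a + 2) /\
  (4 : int) ^+ (a + 1) = 4 * (8 * 2 ^+ (a - 3)) ^+ 2 /\
  ((2 ^ a)%N%:Z = 8 * 2 ^+ (a - 3)).
Proof.
move=> ha.
have e1 : (4 : int) ^+ (a + 1) = 2 ^+ (2 * a + 2).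
  by rewrite (_ : (4:int) = 2 ^+ 2) // -exprM; congr (_ ^+ _); lia.
have e3 : (2 ^ a)%N%:Z = 8 * 2 ^+ (a - 3).
  by rewrite natzX -{1}(subnK ha) exprD mulrC.
split => //; split => //.
rewrite e1 (_ : (2 * a + 2 = 2 * (a - 3) + 8)%N); last by lia.
rewrite exprD mulnC exprM; ring.
Qed.

Lemma cop225 k : coprimez (2 ^+ k.+1) 225.
Proof. by rewrite coprimez_pexpl. Qed.

Lemma partB a : (3 <= a)%N -> ((delannoy (2 ^ a).-1)%:Z = -1 %[mod 4 ^+ (a + 1)])%Z.
Proof.
move=> ha.
have [e4a [e4b eN]] := four_pow ha.
set M := (2 : int) ^+ (a - 3) in e4b eN.
set N := (2 ^ a)%N in eN *.
have N8 : (8 <= N)%N by rewrite /N (_ : 8 = 2 ^ 3)%N // leq_exp2l.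
have hev : ~~ odd N by rewrite /N -(prednK (leq_trans _ ha : (0 < a)%N)) // expnS oddM.
have N0 : (0 < N)%N by lia.
rewrite delannoyE (prednK N0) (PoszS (fun k => 'C(N.-1, k) ^ 2 * 2 ^ k)%N).
pose b i := (-1) ^+ i * ('C(N, i))%:Z.
pose P (j : nat) := \sum_(i < j) b i.+1.
have Hterm : forall j : 'I_N, ('C(N.-1, j) ^ 2 * 2 ^ j)%N%:Z = 2 ^+ j * (1 + P j) ^+ 2.
  move=> j; rewrite PoszM !natzX.
  have := Bsign N.-1 j; rewrite (prednK N0) => H.
  rewrite (_ : 1 + P j = \sum_(i < j.+1) b i); last first.
    by rewrite big_ord_recl /b expr0 bin0 mul1r.
  rewrite -H exprMn sqrr_sign mul1r mulrC //.
rewrite (eq_bigr _ (fun j _ => Hterm j)).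
have Hsplit : \sum_(j < N) 2 ^+ j * (1 + P j) ^+ 2 =
   \sum_(j < N) 2 ^+ j + 2 * (\sum_(j < N) 2 ^+ j * P j) + \sum_(j < N) 2 ^+ j * (P j) ^+ 2.
  rewrite big_distrr -!big_split /=; apply: eq_bigr => j _; ring.
rewrite Hsplit geo /P (G1 (fun i => b i.+1)).
have s1 : \sum_(i < N) b i.+1 = -1.
  have := alt0 N0; rewrite big_ord_recl /= => E0.
  apply: (@addrI _ 1); rewrite addrN -[in RHS]E0 /b; congr (_ + _); by rewrite bin0 expr0 mul1r.
have s2 : \sum_(i < N) b i.+1 * 2 ^+ i.+1 = 0.
  have := alt2 hev; rewrite big_ord_recl /= => E0.
  apply: (@addrI _ 1); rewrite addr0 -[in RHS]E0 /b; congr (_ + _); by rewrite bin0 !expr0 !mulr1.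
have lin : \sum_(i < N) b i.+1 * (2 ^+ N - 2 ^+ i.+1) = - 2 ^+ N.
  rewrite (eq_bigr (fun i : 'I_N => 2 ^+ N * b i.+1 - b i.+1 * 2 ^+ i.+1)); last first.
    by move=> i _; ring.
  by rewrite sumrB -big_distrr /= s1 s2; ring.
rewrite lin.
apply/eqP; rewrite eqz_mod_dvd.
set Q := \sum_(j < N) _.
have -> : 2 ^+ N - 1 + 2 * - 2 ^+ N + Q - -1 = Q - 2 ^+ N by ring.
apply: rpredB; last first.
  rewrite e4a; apply: dvdz_exp2l; have := pow_ge ha; rewrite /N; lia.
have N6 : (6 <= N)%N by lia.
rewrite /Q (split_at (fun j => 2 ^+ j * (\sum_(i < j) b i.+1) ^+ 2) N6); apply: rpredD.
  rewrite !big_ord_recl !big_ord0 /=.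
  have cop : coprimez (4 ^+ (a + 1)) 225.
    rewrite e4a (_ : (2 * a + 2 = (2 * a + 1).+1)%N); [exact: cop225 | lia].
  have [h2 [h3 [h4 h5]]] := binZ (leq_trans (isT : (5 <= 6)%N) N6).
  rewrite eN in h2 h3 h4 h5.
  have E := algB h2 h3 h4 h5.
  set H := (X in (_ %| X)%Z).
  have -> : H = 2 * (- (8*M))^+2 + 4 * (- (8*M) + ('C(N, 2))%:Z)^+2
         + 8 * (- (8*M) + ('C(N, 2))%:Z - ('C(N, 3))%:Z)^+2
         + 16 * (- (8*M) + ('C(N, 2))%:Z - ('C(N, 3))%:Z + ('C(N, 4))%:Z)^+2
         + 32 * (- (8*M) + ('C(N, 2))%:Z - ('C(N, 3))%:Z + ('C(N, 4))%:Z - ('C(N, 5))%:Z)^+2.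
    rewrite /H /b /bump /= bin1 eN; ring.
  rewrite -(Gauss_dvdzr _ cop) E e4b; apply: dvdz_mulr; exact: dvdzz.
apply: rpred_sum => j _; rewrite e4a.
set t := trunc_log 2 (6 + j).
have hP : (2 ^+ (a - t) %| \sum_(i < 6 + j) b i.+1)%Z.
  apply: rpred_sum => i _; rewrite /b; apply: dvdz_mull.
  rewrite -natzX dvdzE /=; apply: Cdiv => //; exact: ltn_ord.
apply: (@dvdz_trans (2 ^+ (6 + j) * (2 ^+ (a - t)) ^+ 2)).
  rewrite -exprM -exprD; apply: dvdz_exp2l; have := bound6 a (leq_addr j 6); rewrite -/t; lia.
apply: dvdz_mul; [exact: dvdzz | exact: dvdz_exp2r].
Qed.

Lemma partA a : (3 <= a)%N -> ((delannoy (2 ^ a).+1)%:Z = 3 + 2 ^+ (a + 2) %[mod 4 ^+ (a + 1)])%Z.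
Proof.
move=> ha.
have [e4a [e4b eN]] := four_pow ha.
set M := (2 : int) ^+ (a - 3) in e4b eN.
have e2 : (2 : int) ^+ (a + 2) = 4 * (8 * M).
  have : (2 : int) ^+ a = 8 * M by rewrite -eN natzX.
  by rewrite exprD => ->; ring.
set N := (2 ^ a)%N in eN *.
have N8 : (8 <= N)%N by rewrite /N (_ : 8 = 2 ^ 3)%N // leq_exp2l.
have N6 : (6 <= N.+2)%N by lia.
rewrite delannoyE (split_atn (fun k => 'C(N.+1, k) ^ 2 * 2 ^ k)%N N6) PoszD.
apply/eqP; rewrite eqz_mod_dvd.
set head := (\sum_(j < 6) _)%N.
set tail := (\sum_(j < N.+2 - 6) _)%N.
have -> : head%:Z + tail%:Z - (3 + 2 ^+ (a + 2)) = tail%:Z + (head%:Z - 3 - 4 * (8 * M)).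
  by rewrite e2; ring.
have cop : coprimez (4 ^+ (a + 1)) 225.
  rewrite e4a (_ : (2 * a + 2 = (2 * a + 1).+1)%N); [exact: cop225 | lia].
apply: rpredD.
  rewrite e4a -natzX dvdzE /= /tail; apply: dvdn_sum => j _.
  set t := trunc_log 2 (6 + j).
  have hC : (2 ^ (a - t) %| 'C(N.+1, 6 + j))%N.
    rewrite (_ : (6 + j = (5 + j).+1)%N) // binS; apply: dvdn_add; apply: Cdiv => //; lia.
  apply: (@dvdn_trans (2 ^ (6 + j) * (2 ^ (a - t)) ^ 2)).
    rewrite -expnM -expnD dvdn_exp2l //; have := bound6 a (leq_addr j 6); rewrite -/t; lia.
  rewrite [X in (_ %| X)%N]mulnC; apply: dvdn_mul => //; exact: dvdn_exp2r.
have N5 : (5 <= N.+1)%N by lia.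
have [h2 [h3 [h4 h5]]] := binZ N5.
have eN1 : (N.+1)%:Z = 8 * M + 1 by rewrite intS eN addrC.
rewrite eN1 in h2 h3 h4 h5.
have h2' : ('C(N.+1, 2))%:Z * 2 = (8*M+1)*(8*M) by rewrite h2; ring.
have h3' : ('C(N.+1, 3))%:Z * 6 = (8*M+1)*(8*M)*(8*M-1) by rewrite h3; ring.
have h4' : ('C(N.+1, 4))%:Z * 24 = (8*M+1)*(8*M)*(8*M-1)*(8*M-2) by rewrite h4; ring.
have h5' : ('C(N.+1, 5))%:Z * 120 = (8*M+1)*(8*M)*(8*M-1)*(8*M-2)*(8*M-3) by rewrite h5; ring.
have E := algA h2' h3' h4' h5'.
have -> : head%:Z - 3 - 4 * (8 * M) = 1 + (8*M+1)^+2*2 + ('C(N.+1, 2))%:Z^+2*4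
   + ('C(N.+1, 3))%:Z^+2*8 + ('C(N.+1, 4))%:Z^+2*16 + ('C(N.+1, 5))%:Z^+2*32 - 3 - 4*(8*M).
  have hh : head = ('C(N.+1, 0) ^ 2 * 2 ^ 0 + ('C(N.+1, 1) ^ 2 * 2 ^ 1 + ('C(N.+1, 2) ^ 2 * 2 ^ 2
     + ('C(N.+1, 3) ^ 2 * 2 ^ 3 + ('C(N.+1, 4) ^ 2 * 2 ^ 4 + ('C(N.+1, 5) ^ 2 * 2 ^ 5 + 0))))))%N.
    by rewrite /head !big_ord_recl big_ord0.
  rewrite hh bin0 bin1; move: ('C(N.+1, 2)) ('C(N.+1, 3)) ('C(N.+1, 4)) ('C(N.+1, 5)) => c2 c3 c4 c5.
  rewrite !PoszD !PoszM !natzX eN1; ring.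
rewrite -(Gauss_dvdzr _ cop) E e4b; apply: dvdz_mulr; exact: dvdzz.
Qed.

Unset Implicit Arguments.

Theorem theorem3p1 (a : nat) (ha : (2 <= a)%N) :
  ((delannoy (2 ^ a).+1)%:Z = 3 + 2 ^+ (a + 2) %[mod 4 ^+ (a + 1)])%Z /\
  ((delannoy (2 ^ a).-1)%:Z = -1 %[mod 4 ^+ (a + 1)])%Z.
Proof.
case: (ltnP a 3) => h3.
  have -> : a = 2%N by lia.
  rewrite /delannoy unlock; split; vm_compute; reflexivity.
split; [exact: partA | exact: partB].
Qed.
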